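(* Let $n \ge 2$. Let $\mathcal{W}_n$ be the set of weighted graphs on $n$ vertices with weights in $[0,1]$, identified with their weighted adjacency matrices, i.e. the set of $n\times n$ real symmetric matrices with all entries in $[0,1]$. Let $\mathcal{G}_n$ be the set of (unweighted, simple) graphs on $n$ vertices. Then \[ \min_{G \in \mathcal{G}_n} \lambda_{n-1}(G) - 2\sqrt{n} \le \inf_{G\in \mathcal{W}_n} \lambda_{n-1}(G). \]
   Context: For a real symmetric $n\times n$ matrix $M$ (in particular the adjacency matrix of a graph or weighted graph), $\lambda_k(M)$ denotes its $k$-th largest eigenvalue, counted with multiplicity, so $\lambda_1 \ge \lambda_2 \ge \dots \ge \lambda_n$. Weighted graphs may have loops (diagonal entries in $[0,1]$). *)

(* Defs.v *)
From HB Require Import structures.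
From mathcomp Require Import all_boot all_order all_algebra.
From mathcomp Require Import boolp classical_sets reals.
Set Implicit Arguments. Unset Strict Implicit. Unset Printing Implicit Defensive.
Import Order.TTheory GRing.Theory Num.Theory.
Local Open Scope ring_scope.

Definition is_spectrum (R : realType) (n : nat) (M : 'M[R]_n) (s : seq R) : Prop :=
  sorted (fun x y : R => y <= x) s /\ char_poly M = \prod_(x <- s) ('X - x%:P).

(* The spectrum of M (for real symmetric M it exists and is unique);
   defaults to [::] when the characteristic polynomial does not split over R. *)
Definition spectrum (R : realType) (n : nat) (M : 'M[R]_n) : seq R :=
  match pselect (exists s, is_spectrum M s) with
  | left H => proj1_sig (cid H)
  | right _ => [::]
  end.

(* lambda_k(M): the k-th largest eigenvalue (k is 1-indexed). *)
Definition lambda (R : realType) (n : nat) (k : nat) (M : 'M[R]_n) : R :=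
  nth 0 (spectrum M) k.-1.

Definition simple_graph (n : nat) (g : 'M[bool]_n) : bool :=
  (g^T == g) && [forall i, ~~ g i i].

Definition adj (R : realType) (n : nat) (g : 'M[bool]_n) : 'M[R]_n :=
  map_mx (fun b : bool => (b%:R : R)) g.

Definition empty_graph (n : nat) : 'M[bool]_n := const_mx false.

(* min over all simple graphs G on n vertices of lambda_k(G)
   (the empty graph, itself a simple graph, is used as the seed of the fold). *)
Definition min_graph_lambda (R : realType) (n k : nat) : R :=
  \big[Num.min/lambda k (adj R (empty_graph n))]_(g : 'M[bool]_n | simple_graph g)
     lambda k (adj R g).

Definition weighted_graphs (R : realType) (n : nat) : set 'M[R]_n :=
  [set W | W^T = W /\ forall i j, 0 <= W i j <= 1].

(* Main.v *)
Require Import Defs.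
From HB Require Import structures.
From mathcomp Require Import all_boot all_order all_algebra.
From mathcomp Require Import boolp classical_sets reals.
From mathcomp Require Import complex spectral sesquilinear.
From mathcomp Require Import ring lra.
Import Order.TTheory GRing.Theory Num.Theory.
Local Open Scope ring_scope.

Set Implicit Arguments. Unset Strict Implicit. Unset Printing Implicit Defensive.

Lemma char_poly_conj (F : fieldType) n (P B : 'M[F]_n) : P \in unitmx ->
  char_poly (invmx P *m B *m P) = char_poly B.
Proof.
move=> Pu; rewrite /char_poly /char_poly_mx.
have eX : 'X%:M = map_mx (@polyC F) (invmx P) *m 'X%:M *m map_mx (@polyC F) P.
  by rewrite scalar_mxC -mulmxA -map_mxM mulVmx // map_mx1 mulmx1.
rewrite !map_mxM {1}eX -mulmxBl -mulmxBr !det_mulmx mulrC mulrA.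
rewrite !det_map_mx -rmorphM -det_mulmx mulmxV // det1 rmorph1 mul1r.
by [].
Qed.
Section Spec.
Variable R : realType.
Local Notation C := (R[i]).
Local Notation toC := (real_complex R).

Lemma conj_toC (x : R) : (toC x)^* = toC x.
Proof. apply/CrealP. by apply/complex_realP; exists x. Qed.

Lemma spec_decomp n (A : 'M[R]_n) : A^T = A -> exists (P : 'M[C]_n) (d : 'I_n -> R),
  [/\ (forall i j, \sum_k P i k * (P j k)^* = (i == j)%:R),
      (forall k l, \sum_i (P i k)^* * P i l = (k == l)%:R),
      (forall k l, toC (A k l) = \sum_i (P i k)^* * toC (d i) * P i l) &
      char_poly A = \prod_i ('X - (d i)%:P) ].
Proof.
move=> sA.
pose Ac := map_mx toC A.
have hA : Ac \is hermsymmx.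
  apply/is_hermitianmxP; rewrite expr0 scale1r.
  apply/matrixP => k l; rewrite !mxE conj_toC.
  by rewrite -[in LHS]sA mxE.
pose P := spectralmx Ac; pose D := spectral_diag Ac.
have PU : P \is unitarymx by apply: spectral_unitarymx.
have eA : Ac = invmx P *m diag_mx D *m P.
  by apply/orthomx_spectralP/hermitian_normalmx.
have Dr : D \is a realmx by apply: hermitian_spectral_diag_real.
exists P, (fun i => complex.Re (D 0 i)).
have eD : forall i, toC (complex.Re (D 0 i)) = D 0 i.
  by move=> i; apply: RRe_real; apply: (mxOverP Dr).
split.
- move=> i j; have /matrixP/(_ i j) := unitarymxP PU.
  by rewrite !mxE => <-; apply: eq_bigr => k _; rewrite !mxE.
- move=> k l.
  have := mulVmx (unitarymx_unit PU); rewrite invmx_unitary //.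
  move=> /matrixP/(_ k l); rewrite !mxE => <-.
  by apply: eq_bigr => i _; rewrite !mxE.
- move=> k l; have -> : toC (A k l) = Ac k l by rewrite mxE.
  rewrite eA invmx_unitary // mul_mx_diag !mxE.
  by apply: eq_bigr => i _; rewrite !mxE eD.
- apply: (@map_poly_inj _ _ toC).
  rewrite map_char_poly -/Ac eA char_poly_conj ?unitarymx_unit //.
  rewrite char_poly_trig ?diag_mx_is_trig // rmorph_prod.
  apply: eq_bigr => i _; rewrite rmorphB /= map_polyX map_polyC /= eD.
  by rewrite !mxE eqxx mulr1n.
Qed.
End Spec.
Section Spec2.
Variable R : realType.
Local Notation C := (R[i]).
Local Notation toC := (real_complex R).

Lemma spectrumP n (A : 'M[R]_n) : (exists s, is_spectrum A s) -> is_spectrum A (spectrum A).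
Proof.
move=> ex; rewrite /spectrum; case: pselect => // H.
by case: (cid H).
Qed.

Lemma spec_full n (A : 'M[R]_n) : A^T = A -> exists (P : 'M[C]_n) (d : 'I_n -> R),
  [/\ (forall i j, \sum_k P i k * (P j k)^* = (i == j)%:R),
      (forall k l, \sum_i (P i k)^* * P i l = (k == l)%:R),
      (forall k l, toC (A k l) = \sum_i (P i k)^* * toC (d i) * P i l),
      perm_eq (spectrum A) [seq d i | i <- enum 'I_n] &
      sorted (fun x y : R => y <= x) (spectrum A) ].
Proof.
move=> sA; have [P [d [h1 h2 h3 h4]]] := spec_decomp sA.
exists P, d.
have cp : char_poly A = \prod_(x <- [seq d i | i <- enum 'I_n]) ('X - x%:P).
  by rewrite big_map big_enum.
have tot : total (fun x y : R => y <= x) by move=> x y; apply: le_total.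
have ex : exists s, is_spectrum A s.
  exists (sort (fun x y : R => y <= x) [seq d i | i <- enum 'I_n]).
  split; first by apply: sort_sorted.
  by rewrite cp; apply: perm_big; rewrite perm_sym perm_sort.
have [ss sc] := spectrumP ex.
split => //.
by apply: prod_XsubC_eq; rewrite -sc.
Qed.
End Spec2.

Section Round.
Variable R : realType.
Local Notation C := (R[i]).
Local Notation toC := (real_complex R).

Definition Nc (z : C) : R := complex.Re z ^+ 2 + complex.Im z ^+ 2.

Lemma Nc_ge0 z : 0 <= Nc z.
Proof. by rewrite /Nc addr_ge0 // sqr_ge0. Qed.

Lemma Nc_lin (z c : C) (s : R) :
  Nc (z + toC s * c) = Nc z + 2 * s * (complex.Re z * complex.Re c + complex.Im z * complex.Im c)
     + s ^+ 2 * Nc c.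
Proof.
case: z => a b; case: c => p q; rewrite /Nc /=.
ring.
Qed.
End Round.
Section Round2.
Variable R : realType.
Local Notation C := (R[i]).
Local Notation toC := (real_complex R).

Definition Fr (E I : finType) (c : I -> E -> C) (b : I -> C) (y : E -> R) : R :=
  \sum_r Nc (\sum_e toC (y e) * c r e - b r).

Lemma Fr_step (E I : finType) (c : I -> E -> C) (b : I -> C) (y : E -> R) (e0 : E) (t : R) :
  Fr c b (fun e => if e == e0 then t else y e) =
  Fr c b y + 2 * (t - y e0) * \sum_r (complex.Re (\sum_e toC (y e) * c r e - b r) * complex.Re (c r e0)
       + complex.Im (\sum_e toC (y e) * c r e - b r) * complex.Im (c r e0))
   + (t - y e0) ^+ 2 * \sum_r Nc (c r e0).
Proof.
rewrite /Fr mulr_sumr mulr_sumr -!big_split /=; apply: eq_bigr => r _.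
have -> : \sum_e toC (if e == e0 then t else y e) * c r e - b r =
   (\sum_e toC (y e) * c r e - b r) + toC (t - y e0) * c r e0.
  rewrite (bigD1 e0) //= [in RHS](bigD1 e0) //= eqxx.
  rewrite (eq_bigr (fun e => toC (y e) * c r e)); last first.
    by move=> e /negbTE ->.
  rewrite rmorphB /= mulrBl; ring.
by rewrite Nc_lin.
Qed.

Lemma rounding_gen (E I : finType) (c : I -> E -> C) (b : I -> C) :
  forall (S : {set E}) (y : E -> R), (forall e, 0 <= y e <= 1) ->
  (forall e, e \notin S -> y e = 0 \/ y e = 1) ->
  exists y' : E -> R, (forall e, y' e = 0 \/ y' e = 1) /\
    Fr c b y' <= Fr c b y + (\sum_(e in S) \sum_r Nc (c r e)) / 4.
Proof.
move=> S; have [k] := ubnP #|S|; elim: k S => // k IH S hS y y01 yS.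
have [S0|[e0 e0S]] := set_0Vmem S.
  exists y; split; first by move=> e; apply: yS; rewrite S0 inE.
  by rewrite S0 big_set0 mul0r addr0.
set A := \sum_r Nc (c r e0).
set L := \sum_r (complex.Re (\sum_e toC (y e) * c r e - b r) * complex.Re (c r e0) + complex.Im (\sum_e toC (y e) * c r e - b r) * complex.Im (c r e0)).
have A0 : 0 <= A by apply: sumr_ge0 => r _; apply: Nc_ge0.
pose yt t := fun e => if e == e0 then t else y e.
have F0 := Fr_step c b y e0 0; have F1 := Fr_step c b y e0 1.
rewrite -/(yt 0) -/L -/A in F0; rewrite -/(yt 1) -/L -/A in F1.
have /andP[w0 w1] : 0 <= y e0 <= 1 by apply: y01.
have [t [t01 Ft]] : exists t : R, (t = 0 \/ t = 1) /\ Fr c b (yt t) <= Fr c b y + A / 4.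
  have comb : (1 - y e0) * Fr c b (yt 0) + y e0 * Fr c b (yt 1) = Fr c b y + y e0 * (1 - y e0) * A.
    rewrite F0 F1; ring.
  have bnd : y e0 * (1 - y e0) * A <= A / 4.
    have h : y e0 * (1 - y e0) <= 1/4.
      rewrite -subr_ge0; have -> : 1/4 - y e0 * (1 - y e0) = (y e0 - 1/2) ^+ 2 by field.
      exact: sqr_ge0.
    have := ler_wpM2r A0 h; lra.
  case: (lerP (Fr c b (yt 0)) (Fr c b (yt 1))) => h.
    exists 0; split; first by left.
    have : (1 - y e0) * Fr c b (yt 0) + y e0 * Fr c b (yt 0) <= (1 - y e0) * Fr c b (yt 0) + y e0 * Fr c b (yt 1).
      by rewrite lerD2l ler_wpM2l.
    lra.
  exists 1; split; first by right.
  have : (1 - y e0) * Fr c b (yt 1) + y e0 * Fr c b (yt 1) <= (1 - y e0) * Fr c b (yt 0) + y e0 * Fr c b (yt 1).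
    by rewrite lerD2r ler_wpM2l ?subr_ge0 // ltW.
  lra.
have hS' : (#|S :\ e0| < k)%N.
  by move: hS; rewrite (cardsD1 e0 S) e0S add1n ltnS.
have yt01 : forall e, 0 <= yt t e <= 1.
  move=> e; rewrite /yt; case: ifP => _; last by apply: y01.
  by case: t01 => ->; rewrite ?lexx ?ler01.
have ytS : forall e, e \notin S :\ e0 -> yt t e = 0 \/ yt t e = 1.
  move=> e; rewrite /yt; case: ifP => // /negbT ne; rewrite !inE ne /= => eS.
  by apply: yS.
have [y' [y'01 Fy']] := IH _ hS' (yt t) yt01 ytS.
exists y'; split => //.
rewrite [X in _ <= _ + X / 4](bigD1 e0) //= -/A.
have -> : \sum_(i in S | i != e0) \sum_r Nc (c r i) = \sum_(i in S :\ e0) \sum_r Nc (c r i).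
  by apply: eq_bigl => e; rewrite !inE andbC.
lra.
Qed.
End Round2.
Section CH.
Variable R : realType.
Local Notation C := (R[i]).
Local Notation toC := (real_complex R).
Local Notation Re := (@complex.Re R).
Local Notation Im := (@complex.Im R).

Lemma conjE (z : C) : z^* = Complex (Re z) (- Im z).
Proof. by case: z. Qed.

Lemma ReD (z w : C) : Re (z + w) = Re z + Re w. Proof. by case: z; case: w. Qed.
Lemma ImD (z w : C) : Im (z + w) = Im z + Im w. Proof. by case: z; case: w. Qed.
Lemma ReN (z : C) : Re (- z) = - Re z. Proof. by case: z. Qed.
Lemma ReB (z w : C) : Re (z - w) = Re z - Re w. Proof. by rewrite ReD ReN. Qed.
Lemma Re_sum (I : finType) (P : pred I) (F : I -> C) : Re (\sum_(i | P i) F i) = \sum_(i | P i) Re (F i).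
Proof.
exact: (big_morph _ ReD (erefl (Re 0))).
Qed.
Lemma Re_toCM (a : R) (z : C) : Re (toC a * z) = a * Re z.
Proof. by case: z => x y /=; ring. Qed.
Lemma Re_mulJ (z : C) : Re (z * z^*) = Nc z.
Proof. by case: z => x y; rewrite /Nc /=; ring. Qed.
Lemma Re_mulMJ (z : C) (a : R) : Re (z * toC a * z^*) = a * Nc z.
Proof. by case: z => x y; rewrite /Nc /=; ring. Qed.
Lemma Nc_mulJ (z w : C) : Nc (z * w^*) = Nc z * Nc w.
Proof. by case: z => x y; case: w => p q; rewrite /Nc /=; ring. Qed.
Lemma Nc_add_le (z w : C) : Nc (z + w) <= 2 * Nc z + 2 * Nc w.
Proof.
rewrite -subr_ge0.
have -> : 2 * Nc z + 2 * Nc w - Nc (z + w) = Nc (z - w).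
  by case: z => x y; case: w => p q; rewrite /Nc /=; ring.
exact: Nc_ge0.
Qed.
Lemma normcE' (z : C) : Normc.normc z = Num.sqrt (Nc z).
Proof. by case: z. Qed.
Lemma Re_le_normc (z : C) : Re z <= Normc.normc z.
Proof.
rewrite normcE' /Nc; apply: le_trans (ler_norm _) _.
rewrite -sqrtr_sqr ler_sqrt ?addr_ge0 ?sqr_ge0 //.
by rewrite lerDl sqr_ge0.
Qed.
Lemma normc_sq (z : C) : Normc.normc z ^+ 2 = Nc z.
Proof. by rewrite normcE' sqr_sqrtr // Nc_ge0. Qed.
Lemma normc_ge0' (z : C) : 0 <= Normc.normc z.
Proof. by rewrite normcE' sqrtr_ge0. Qed.
Lemma normcM' (z w : C) : Normc.normc (z * w) = Normc.normc z * Normc.normc w.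
Proof. exact: Normc.normcM. Qed.
Lemma normcJ' (z : C) : Normc.normc (z^*) = Normc.normc z.
Proof. by rewrite !normcE' /Nc conjE /= sqrrN. Qed.
Lemma normcD' (z w : C) : Normc.normc (z + w) <= Normc.normc z + Normc.normc w.
Proof. exact: le_normcD. Qed.
End CH.
Section BF.
Variable R : realType.
Local Notation C := (R[i]).
Local Notation toC := (real_complex R).

Definition bf n (u v : 'I_n -> C) (M : 'I_n -> 'I_n -> C) : C :=
  \sum_k \sum_l u k * M k l * (v l)^*.

Lemma bf_expand n (a b : C) (u1 u2 : 'I_n -> C) M :
  bf (fun k => a * u1 k + b * u2 k) (fun k => a * u1 k + b * u2 k) M =
  a * a^* * bf u1 u1 M + a * b^* * bf u1 u2 M + b * a^* * bf u2 u1 M + b * b^* * bf u2 u2 M.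
Proof.
rewrite /bf !mulr_sumr -!big_split; apply: eq_bigr => k _.
rewrite !mulr_sumr -!big_split; apply: eq_bigr => l _ /=.
rewrite rmorphD !rmorphM /=; ring.
Qed.

Lemma bf_lin n (u v : 'I_n -> C) M1 M2 M3 :
  bf u v (fun k l => M1 k l + M2 k l - M3 k l) = bf u v M1 + bf u v M2 - bf u v M3.
Proof.
rewrite /bf -big_split -sumrB; apply: eq_bigr => k _ /=.
rewrite -big_split -sumrB; apply: eq_bigr => l _ /=; ring.
Qed.

Lemma bf_diag n (x : 'I_n -> C) (Q : 'M[C]_n) (e : 'I_n -> C) M :
  (forall k l, M k l = \sum_i (Q i k)^* * e i * Q i l) ->
  bf x x M = \sum_i e i * ((\sum_k x k * (Q i k)^*) * (\sum_k x k * (Q i k)^*)^*).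
Proof.
move=> hM; rewrite /bf.
under eq_bigr => k _ do under eq_bigr => l _ do rewrite hM mulr_sumr mulr_suml.
under eq_bigr => k _ do rewrite exchange_big.
rewrite exchange_big; apply: eq_bigr => i _.
rewrite rmorph_sum mulr_suml mulr_sumr; apply: eq_bigr => k _.
rewrite mulr_sumr mulr_sumr; apply: eq_bigr => l _.
rewrite rmorphM /= conjCK; ring.
Qed.

Lemma swap_lt (V : zmodType) n (g : 'I_n -> 'I_n -> V) :
  \sum_(k < n) \sum_(l < n) (if (l < k)%N then g l k else 0) = \sum_(k < n) \sum_(l < n) (if (k < l)%N then g k l else 0).
Proof. by rewrite exchange_big. Qed.

Definition Gy n (y : 'I_n * 'I_n -> R) (k l : 'I_n) : R :=
  if (k < l)%N then y (k, l) else if (l < k)%N then y (l, k) else 0.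

Definition cc n (u v : 'I_n -> C) (e : 'I_n * 'I_n) : C :=
  if (e.1 < e.2)%N then u e.1 * (v e.2)^* + u e.2 * (v e.1)^* else 0.

Lemma bf_Gy n (u v : 'I_n -> C) (y : 'I_n * 'I_n -> R) :
  bf u v (fun k l => toC (Gy y k l)) = \sum_e toC (y e) * cc u v e.
Proof.
have -> : \sum_e toC (y e) * cc u v e = \sum_k \sum_l toC (y (k, l)) * cc u v (k, l).
  by rewrite pair_bigA; apply: eq_bigr => -[k l] _.
rewrite /bf.
have -> : \sum_k \sum_l u k * toC (Gy y k l) * (v l)^* =
  \sum_(k < n) \sum_(l < n) ((if (k < l)%N then toC (y (k, l)) * (u k * (v l)^*) else 0) +
                 (if (l < k)%N then toC (y (l, k)) * (u k * (v l)^*) else 0)).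
  apply: eq_bigr => k _; apply: eq_bigr => l _; rewrite /Gy.
  case: (ltngtP k l) => h.
  - ring.
  - ring.
  - rewrite rmorph0; ring.
rewrite (eq_bigr (fun k : 'I_n => \sum_(l < n) (if (k < l)%N then toC (y (k, l)) * (u k * (v l)^*) else 0) +
                 \sum_(l < n) (if (l < k)%N then toC (y (l, k)) * (u k * (v l)^*) else 0))); last first.
  by move=> k _; rewrite big_split.
rewrite big_split /= (swap_lt (fun l k : 'I_n => toC (y (l, k)) * (u k * (v l)^*))) -big_split /=.
apply: eq_bigr => k _; rewrite -big_split; apply: eq_bigr => l _ /=.
rewrite /cc /=; case: ifP => _; last by rewrite mulr0 addr0.
by rewrite mulrDr.
Qed.
End BF.
Lemma count_enum_ord n (a : pred 'I_n) : count a (enum 'I_n) = #|a|.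
Proof.
rewrite -size_filter cardE /enum_mem -filter_predI; congr size; apply: eq_filter => x /=.
by rewrite inE andbT.
Qed.

Lemma subn_pred2 n : (2 <= n)%N -> (n - n.-2 = 2)%N.
Proof. by case: n => // [[|m]] //= _; rewrite -addn2 addKn. Qed.
Lemma subn_pred1 n : (2 <= n)%N -> (n - n.-1 = 1)%N.
Proof. by case: n => // m _ /=; rewrite -addn1 addKn. Qed.

Section Idx.
Variable R : realType.

Lemma sorted_ge_nth (s : seq R) i j : sorted (fun x y : R => y <= x) s ->
  (i <= j)%N -> (j < size s)%N -> nth 0 s j <= nth 0 s i.
Proof.
move=> ss ij js.
have tr : transitive (fun x y : R => y <= x) by move=> a b c /= h1 h2; apply: le_trans h2 h1.
have rf : reflexive (fun x y : R => y <= x) by move=> a /=.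
apply: (@sorted_leq_nth _ (fun x y : R => y <= x) tr rf 0 s ss i j) => //.
by rewrite inE (leq_ltn_trans ij js).
Qed.

Lemma idx_two n (s : seq R) (f : 'I_n -> R) : (2 <= n)%N ->
  sorted (fun x y : R => y <= x) s -> perm_eq s [seq f i | i <- enum 'I_n] ->
  exists k1 k2, [/\ k1 != k2, f k1 <= nth 0 s n.-2 & f k2 <= nth 0 s n.-2].
Proof.
move=> n2 ss ps.
have sz : size s = n by rewrite (perm_size ps) size_map size_enum_ord.
set mu := nth 0 s n.-2.
have c2 : (2 <= count (fun x : R => (x <= mu)%R) s)%N.
  rewrite -(cat_take_drop n.-2 s) count_cat.
  have : all (fun x : R => (x <= mu)%R) (drop n.-2 s).
    apply/(all_nthP 0) => i; rewrite size_drop nth_drop sz => hi.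
    apply: sorted_ge_nth => //; first by rewrite leq_addr.
    by rewrite sz -ltn_subRL.
  rewrite all_count => /eqP ->; rewrite size_drop sz.
  rewrite subn_pred2 //.
  by rewrite leq_addl.
move: c2; rewrite (permP ps) count_map count_enum_ord => /card_gt1P [k1 [k2 [h1 h2 h3]]].
by exists k1, k2; split.
Qed.

Lemma idx_one n (s : seq R) (f : 'I_n -> R) (i0 : 'I_n) : (2 <= n)%N ->
  sorted (fun x y : R => y <= x) s -> perm_eq s [seq f i | i <- enum 'I_n] ->
  exists m, forall i, i != m -> nth 0 s n.-2 <= f i.
Proof.
move=> n2 ss ps.
have sz : size s = n by rewrite (perm_size ps) size_map size_enum_ord.
set la := nth 0 s n.-2.
have c1 : (count (fun x : R => (x < la)%R) s <= 1)%N.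
  rewrite -(cat_take_drop n.-1 s) count_cat.
  have -> : count (fun x : R => (x < la)%R) (take n.-1 s) = 0%N.
    apply/eqP; rewrite -leqn0 leqNgt -has_count; apply/negP => /(has_nthP 0) [i hi].
    have n1 : (0 < n.-1)%N by rewrite -subn1 subn_gt0.
    move: hi; rewrite size_take sz ltn_predL (ltn_trans _ n2) // => hi.
    rewrite nth_take // ltNge => /negP; apply; apply: sorted_ge_nth => //.
      by rewrite -ltnS /= prednK.
    by rewrite sz (leq_ltn_trans (leq_pred _)) // ltn_predL (ltn_trans _ n2).
  rewrite ssrnat.add0n; apply: leq_trans (count_size _ _) _.
  by rewrite size_drop sz subn_pred1.
move: c1; rewrite (permP ps) count_map count_enum_ord => /card_le1_eqP c1.
case: (pickP (fun i => f i < la)) => [m hm|none].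
  exists m => i im; rewrite leNgt; apply/negP => hi.
  by move/eqP: im; apply; apply: c1.
exists i0 => i _; rewrite leNgt; apply/negP => hi.
by have := none i; rewrite /= hi.
Qed.
End Idx.
Section Final1.
Variable R : realType.
Local Notation C := (R[i]).
Local Notation toC := (real_complex R).

Lemma real_ineq (n : nat) (a b p q r s : R) : (2 <= n)%N ->
  0 <= a -> 0 <= b -> 0 <= p -> 0 <= q -> 0 <= r -> 0 <= s ->
  p ^+ 2 + q ^+ 2 + r ^+ 2 + s ^+ 2 <= 2 ->
  a ^+ 2 * p + a * b * q + b * a * r + b ^+ 2 * s <= 2 * Num.sqrt (n%:R) * (a ^+ 2 + b ^+ 2).
Proof.
move=> n2 a0 b0 p0 q0 r0 s0 hs.
set T := p + s + (q + r) / 2.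
have T0 : 0 <= T by rewrite /T !addr_ge0 // divr_ge0 // addr_ge0.
have T5 : T ^+ 2 <= 5.
  have h : T ^+ 2 <= 5 / 2 * (p ^+ 2 + q ^+ 2 + r ^+ 2 + s ^+ 2).
    rewrite -subr_ge0.
    have -> : 5 / 2 * (p ^+ 2 + q ^+ 2 + r ^+ 2 + s ^+ 2) - T ^+ 2 =
      (p - s) ^+ 2 + ((p - 2 * q) ^+ 2 + (p - 2 * r) ^+ 2 + (s - 2 * q) ^+ 2 + (s - 2 * r) ^+ 2) / 4
      + (q - r) ^+ 2 / 4.
      by rewrite /T; field.
    by rewrite ?addr_ge0 ?divr_ge0 ?sqr_ge0 ?addr_ge0 ?sqr_ge0.
  apply: le_trans h _; lra.
have sq : 0 <= Num.sqrt (n%:R : R) by apply: sqrtr_ge0.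
have sq2 : Num.sqrt (n%:R : R) ^+ 2 = n%:R by rewrite sqr_sqrtr // ler0n.
have n2' : (2 : R) <= n%:R by rewrite (ler_nat R 2 n).
have TS : T <= 2 * Num.sqrt (n%:R : R).
  have h2 : T ^+ 2 <= (2 * Num.sqrt (n%:R : R)) ^+ 2 by rewrite exprMn sq2; lra.
  by move: h2; rewrite ler_pXn2r // ?nnegrE // mulr_ge0.
have ab : a * b <= (a ^+ 2 + b ^+ 2) / 2.
  have := sqr_ge0 (a - b); rewrite sqrrB; lra.
have X0 : 0 <= a ^+ 2 + b ^+ 2 by rewrite addr_ge0 // sqr_ge0.
have e1 : a ^+ 2 * p + a * b * q + b * a * r + b ^+ 2 * s <= (a ^+ 2 + b ^+ 2) * T.
  rewrite /T [b * a]mulrC.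
  have h1 : a * b * (q + r) <= (a ^+ 2 + b ^+ 2) / 2 * (q + r) by apply: ler_wpM2r; rewrite ?addr_ge0.
  have h3 : 0 <= a ^+ 2 * s + b ^+ 2 * p by rewrite addr_ge0 // mulr_ge0 // sqr_ge0.
  rewrite -subr_ge0.
  have -> : (a ^+ 2 + b ^+ 2) * (p + s + (q + r) / 2) -
     (a ^+ 2 * p + a * b * q + a * b * r + b ^+ 2 * s) =
     ((a ^+ 2 + b ^+ 2) / 2 * (q + r) - a * b * (q + r)) + (a ^+ 2 * s + b ^+ 2 * p) by field.
  by rewrite addr_ge0 // subr_ge0.
apply: le_trans e1 _; rewrite mulrC; exact: ler_wpM2r.
Qed.
End Final1.
Section Coef.
Variable R : realType.
Local Notation C := (R[i]).
Local Notation toC := (real_complex R).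

Lemma Nc0 : Nc (0 : C) = 0.
Proof. by rewrite /Nc /= expr0n /= addr0. Qed.

Lemma coef_bound n (u v : 'I_n -> C) :
  \sum_k Nc (u k) = 1 -> \sum_k Nc (v k) = 1 -> \sum_e Nc (cc u v e) <= 2.
Proof.
move=> hu hv.
have -> : \sum_e Nc (cc u v e) = \sum_k \sum_l Nc (cc u v (k, l)).
  by rewrite pair_bigA; apply: eq_bigr => -[k l] _.
apply: (@le_trans _ _ (\sum_(k < n) \sum_(l < n)
   ((if (k < l)%N then 2 * (Nc (u k) * Nc (v l)) else 0) +
    (if (k < l)%N then 2 * (Nc (u l) * Nc (v k)) else 0)))).
  apply: ler_sum => k _; apply: ler_sum => l _; rewrite /cc /=.
  case: ifP => _; last by rewrite Nc0 addr0.
  by rewrite -!Nc_mulJ; apply: le_trans (Nc_add_le _ _) _; rewrite -mulrDr.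
rewrite (eq_bigr (fun k : 'I_n => \sum_(l < n) (if (k < l)%N then 2 * (Nc (u k) * Nc (v l)) else 0) +
     \sum_(l < n) (if (k < l)%N then 2 * (Nc (u l) * Nc (v k)) else 0))); last first.
  by move=> k _; rewrite big_split.
rewrite big_split /= -(swap_lt (fun l k : 'I_n => 2 * (Nc (u k) * Nc (v l)))) -big_split /=.
apply: (@le_trans _ _ (\sum_(k < n) \sum_(l < n) 2 * (Nc (u k) * Nc (v l)))).
  apply: ler_sum => k _; rewrite -big_split; apply: ler_sum => l _ /=.
  have h : 0 <= 2 * (Nc (u k) * Nc (v l)) by rewrite mulr_ge0 ?mulr_ge0 ?Nc_ge0.
  case: (ltngtP k l) => _; rewrite ?addr0 ?add0r //.
have -> : \sum_(k < n) \sum_(l < n) 2 * (Nc (u k) * Nc (v l)) =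
   2 * ((\sum_k Nc (u k)) * (\sum_l Nc (v l))).
  rewrite mulr_suml mulr_sumr; apply: eq_bigr => k _.
  by rewrite mulr_sumr mulr_sumr; apply: eq_bigr => l _.
by rewrite hu hv !mulr1.
Qed.
End Coef.
Section Helpers2.
Variable R : realType.
Local Notation C := (R[i]).
Local Notation toC := (real_complex R).

Lemma Nc_gt0 (z : C) : z != 0 -> 0 < Nc z.
Proof.
move=> nz; rewrite lt_def Nc_ge0 andbT; apply: contra nz => /eqP.
case: z => a b; rewrite /Nc /= => /eqP; rewrite paddr_eq0 ?sqr_ge0 // !sqrf_eq0.
by case/andP => /eqP -> /eqP ->.
Qed.

Lemma eq_bf n (u v : 'I_n -> C) (M M' : 'I_n -> 'I_n -> C) :
  (forall k l, M k l = M' k l) -> bf u v M = bf u v M'.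
Proof.
by move=> h; rewrite /bf; apply: eq_bigr => k _; apply: eq_bigr => l _; rewrite h.
Qed.

Lemma bf_add n (u v : 'I_n -> C) M1 M2 :
  bf u v (fun k l => M1 k l + M2 k l) = bf u v M1 + bf u v M2.
Proof.
rewrite /bf -big_split; apply: eq_bigr => k _ /=.
rewrite -big_split; apply: eq_bigr => l _ /=; ring.
Qed.

Lemma bf_delta n (u v : 'I_n -> C) :
  bf u v (fun k l => ((k == l)%:R : C)) = \sum_k u k * (v k)^*.
Proof.
rewrite /bf; apply: eq_bigr => k _.
rewrite (bigD1 k) //= big1 ?addr0 ?eqxx ?mulr1 // => l /negbTE.
by rewrite eq_sym => ->; rewrite mulr0 mul0r.
Qed.

Lemma Re1 : complex.Re (1 : C) = 1. Proof. by []. Qed.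
Lemma Re0 : complex.Re (0 : C) = 0. Proof. by []. Qed.
End Helpers2.

Local Open Scope ring_scope.
Section Main.
Variable R : realType.
Local Notation C := (R[i]).
Local Notation toC := (real_complex R).

Lemma main_round n (W : 'M[R]_n) : (2 <= n)%N -> W^T = W -> (forall i j, 0 <= W i j <= 1) ->
  exists g : 'M[bool]_n, simple_graph g /\
    lambda n.-1 (adj R g) <= lambda n.-1 W + 2 * Num.sqrt (n%:R : R).
Proof.
move=> n2 sW W01.
have [P [d [h1 h2 h3 pW sWs]]] := spec_full sW.
have [k1 [k2 [k12 dk1 dk2]]] := idx_two n2 sWs pW.
set mu := nth 0 (spectrum W) n.-2 in dk1 dk2.
pose u1 := fun k => P k1 k.
pose u2 := fun k => P k2 k.
pose ua := fun r : bool => if r then u1 else u2.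
have nrm : forall i, \sum_k Nc (P i k) = 1.
  move=> i; have := h1 i i; rewrite eqxx => /(congr1 (@complex.Re R)).
  rewrite Re_sum Re1 => <-; apply: eq_bigr => k _; by rewrite Re_mulJ.
have nrm' : forall r, \sum_k Nc (ua r k) = 1 by case; apply: nrm.
pose c := fun (r : bool * bool) (e : 'I_n * 'I_n) => cc (ua r.1) (ua r.2) e.
pose y0 := fun e : 'I_n * 'I_n => W e.1 e.2.
pose b := fun r => \sum_e toC (y0 e) * c r e.
have y001 : forall e, 0 <= y0 e <= 1 by move=> e; apply: W01.
have [y' [y'01 Fy']] := @rounding_gen _ _ _ c b [set: 'I_n * 'I_n]%SET y0 y001 (fun e => ltac:(by rewrite inE)).
have F0 : Fr c b y0 = 0 by rewrite /Fr big1 // => r _; rewrite subrr Nc0.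
have sum4 : forall f : bool * bool -> R,
    \sum_r f r = f (true, true) + f (true, false) + f (false, true) + f (false, false).
  move=> f; rewrite (eq_bigr (fun p => f (p.1, p.2))); last by case.
  by rewrite -(pair_bigA _ (fun i j => f (i, j))) /= !big_bool /= addrA.
have Fb : Fr c b y' <= 2.
  apply: le_trans Fy' _; rewrite F0 add0r.
  have : \sum_(e in [set: 'I_n * 'I_n]%SET) \sum_r Nc (c r e) <= 8.
    rewrite (eq_bigl predT); last by move=> e; rewrite inE.
    rewrite exchange_big sum4.
    have hb : forall r, \sum_e Nc (c r e) <= 2 by move=> r; apply: coef_bound.
    by move: (hb (true, true)) (hb (true, false)) (hb (false, true)) (hb (false, false)); lra.
  lra.
pose g : 'M[bool]_n := \matrix_(k, l) (if (k < l)%N then y' (k, l) == 1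
                          else if (l < k)%N then y' (l, k) == 1 else false).
have sg : simple_graph g.
  apply/andP; split.
  - apply/eqP/matrixP => k l; rewrite !mxE.
    by case: (ltngtP k l).
  - by apply/forallP => k; rewrite mxE ltnn.
pose G := adj R g.
have bin : forall e, ((y' e == 1)%:R : R) = y' e.
  by move=> e; case: (y'01 e) => ->; rewrite ?eqxx // eq_sym oner_eq0.
have GE : forall k l, G k l = Gy y' k l.
  move=> k l; rewrite /G /adj !mxE /Gy.
  by case: (ltngtP k l) => _; rewrite ?bin.
have sG : G^T = G.
  by rewrite /G /adj map_trmx; move: sg => /andP[/eqP -> _].
have [Q [e [q1 q2 q3 pG sGs]]] := spec_full sG.
have [m hm] := idx_one k1 n2 sGs pG.
set la := nth 0 (spectrum G) n.-2 in hm.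
pose ip := fun (u : 'I_n -> C) => \sum_l u l * (Q m l)^*.
pose a0 := ip u2.
pose b0 := - ip u1.
pose al := if (a0 == 0) && (b0 == 0) then 1 else a0.
pose be := if (a0 == 0) && (b0 == 0) then 0 else b0.
pose x := fun k => al * u1 k + be * u2 k.
have ipx : \sum_k x k * (Q m k)^* = 0.
  have -> : \sum_k x k * (Q m k)^* = al * ip u1 + be * ip u2.
    by rewrite /ip !mulr_sumr -big_split; apply: eq_bigr => k _ /=; rewrite /x; ring.
  rewrite /al /be; case: ifP => [/andP[_ /eqP b00]|_].
  - by rewrite mul1r mul0r addr0; apply/eqP; rewrite -oppr_eq0; apply/eqP.
  - rewrite /a0 /b0; ring.
have ab0 : 0 < Nc al + Nc be.
  rewrite /al /be; case: ifP => [_|/negbT].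
  - by rewrite Nc0 addr0 /Nc /= expr0n /= addr0 expr1n ltr01.
  - rewrite negb_and => /orP[h|h].
    + by apply: (lt_le_trans (Nc_gt0 h)); rewrite lerDl Nc_ge0.
    + by apply: (lt_le_trans (Nc_gt0 h)); rewrite lerDr Nc_ge0.
pose dl := fun k l : 'I_n => ((k == l)%:R : C).
pose RX := complex.Re (bf x x dl).
have k21 : (k2 == k1) = false by rewrite eq_sym (negbTE k12).
have RXe : RX = Nc al + Nc be.
  rewrite /RX /x bf_expand !bf_delta /u1 /u2 !h1 eqxx (negbTE k12) k21 /= mulr1n mulr0n.
  by rewrite !mulr0 !addr0 eqxx /= mulr1n !mulr1 ReD !Re_mulJ.
pose cG := fun i => \sum_k x k * (Q i k)^*.
have qGd := @bf_diag _ _ x Q (fun i => toC (e i)) (fun k l => toC (G k l)) q3.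
have nxG := @bf_diag _ _ x Q (fun _ => 1) dl
   (fun k l => ltac:(by rewrite /dl -q2; apply: eq_bigr => i _; rewrite mulr1)).
have laX : la * RX <= complex.Re (bf x x (fun k l => toC (G k l))).
  rewrite qGd /RX nxG !Re_sum mulr_sumr; apply: ler_sum => i _.
  rewrite mul1r Re_toCM Re_mulJ.
  case: (eqVneq i m) => [->|im].
    by rewrite ipx Nc0 !mulr0.
  by apply: ler_wpM2r; [apply: Nc_ge0 | apply: hm].
pose cW := fun i => \sum_k x k * (P i k)^*.
have cWe : forall i, cW i = al * (k1 == i)%:R + be * (k2 == i)%:R.
  move=> i; rewrite -!h1 /cW !mulr_sumr -big_split; apply: eq_bigr => k _.
  by rewrite /x /u1 /u2 /= mulrDl !mulrA.
have qWd := @bf_diag _ _ x P (fun i => toC (d i)) (fun k l => toC (W k l)) h3.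
have nxW := @bf_diag _ _ x P (fun _ => 1) dl
   (fun k l => ltac:(by rewrite /dl -h2; apply: eq_bigr => i _; rewrite mulr1)).
have WX : complex.Re (bf x x (fun k l => toC (W k l))) <= mu * RX.
  rewrite qWd /RX nxW !Re_sum mulr_sumr; apply: ler_sum => i _.
  rewrite mul1r Re_toCM Re_mulJ -/(cW i).
  case: (eqVneq i k1) => [->|ik1]; first by apply: ler_wpM2r => //; apply: Nc_ge0.
  case: (eqVneq i k2) => [->|ik2]; first by apply: ler_wpM2r => //; apply: Nc_ge0.
  rewrite cWe eq_sym (negbTE ik1) eq_sym (negbTE ik2) !mulr0 addr0 Nc0.
  by rewrite !mulr0.
pose Dg := fun k l : 'I_n => if k == l then toC (W k k) else 0.
have eG : bf x x (fun k l => toC (G k l)) = bf x x (fun k l => toC (Gy y' k l)).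
  by apply: eq_bf => k l; rewrite GE.
have eW : bf x x (fun k l => toC (W k l)) = bf x x (fun k l => toC (Gy y0 k l)) + bf x x Dg.
  rewrite -bf_add; apply: eq_bf => k l; rewrite /Dg /Gy.
  case: (eqVneq k l) => [<-|kl]; first by rewrite ltnn rmorph0 add0r.
  rewrite addr0; case: (ltngtP k l) => h //.
    by rewrite /y0 /= -{1}sW mxE.
  by move/val_inj: h => h; rewrite h eqxx in kl.
have Dg0 : 0 <= complex.Re (bf x x Dg).
  rewrite Re_sum; apply: sumr_ge0 => k _; rewrite Re_sum; apply: sumr_ge0 => l _.
  rewrite /Dg; case: (eqVneq k l) => [<-|_].
    by rewrite Re_mulMJ mulr_ge0 // ?Nc_ge0 //; case/andP: (W01 k k).
  by rewrite mulr0 mul0r Re0.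
pose mm := fun r : bool * bool => bf (ua r.1) (ua r.2) (fun k l => toC (Gy y' k l))
                                  - bf (ua r.1) (ua r.2) (fun k l => toC (Gy y0 k l)).
have mE : forall r, mm r = \sum_e toC (y' e) * c r e - b r.
  by move=> r; rewrite /mm !bf_Gy.
have FE : Fr c b y' = \sum_r Nc (mm r).
  by rewrite /Fr; apply: eq_bigr => r _; rewrite mE.
have qDe : bf x x (fun k l => toC (Gy y' k l)) - bf x x (fun k l => toC (Gy y0 k l)) =
   al * al^* * mm (true, true) + al * be^* * mm (true, false) +
   be * al^* * mm (false, true) + be * be^* * mm (false, false).
  rewrite /x !bf_expand /mm /=; ring.
have t : forall z w v : C, Normc.normc (z * w^* * v) = Normc.normc z * Normc.normc w * Normc.normc v.
  by move=> z w v; rewrite !normcM' normcJ'.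
have n4 : forall A B C' D : C, Normc.normc (A + B + C' + D) <=
    Normc.normc A + Normc.normc B + Normc.normc C' + Normc.normc D.
  move=> A B C' D; apply: le_trans (normcD' _ _) _; rewrite lerD2r.
  apply: le_trans (normcD' _ _) _; rewrite lerD2r; exact: normcD'.
set a := Normc.normc al.
set bb := Normc.normc be.
have qDb : complex.Re (bf x x (fun k l => toC (Gy y' k l)) - bf x x (fun k l => toC (Gy y0 k l)))
   <= a ^+ 2 * Normc.normc (mm (true, true)) + a * bb * Normc.normc (mm (true, false))
      + bb * a * Normc.normc (mm (false, true)) + bb ^+ 2 * Normc.normc (mm (false, false)).
  apply: le_trans (Re_le_normc _) _; rewrite qDe; apply: le_trans (n4 _ _ _ _) _.
  by rewrite !t -/a -/bb !expr2.
have Fb' : Normc.normc (mm (true, true)) ^+ 2 + Normc.normc (mm (true, false)) ^+ 2 +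
     Normc.normc (mm (false, true)) ^+ 2 + Normc.normc (mm (false, false)) ^+ 2 <= 2.
  by rewrite !normc_sq; move: Fb; rewrite FE sum4.
have RI := real_ineq n2 (normc_ge0' al) (normc_ge0' be) (normc_ge0' _) (normc_ge0' _)
    (normc_ge0' _) (normc_ge0' _) Fb'.
rewrite -/a -/bb in RI.
have RXab : RX = a ^+ 2 + bb ^+ 2 by rewrite RXe /a /bb !normc_sq.
have RX0 : 0 < RX by rewrite RXe.
have key : la * RX <= (mu + 2 * Num.sqrt (n%:R : R)) * RX.
  move: laX WX qDb Dg0 RI; rewrite eG eW ReB ReD -RXab; lra.
exists g; split => //.
by rewrite /lambda -/la -/mu -(ler_pM2r RX0).
Qed.
End Main.

Local Open Scope classical_set_scope.

Theorem theorem1p7 (R : realType) (n : nat) (hn : (2 <= n)%N) :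
  min_graph_lambda R n n.-1 - 2 * Num.sqrt (n%:R : R)
    <= inf [set lambda n.-1 W | W in @weighted_graphs R n].
Proof.
apply: lb_le_inf.
  exists (lambda n.-1 (0 : 'M[R]_n)), 0 => //.
  by split; [rewrite trmx0 | move=> i j; rewrite mxE lexx ler01].
move=> _ [W [sW W01] <-]; have [g [sg hg]] := main_round hn sW W01.
rewrite lerBlDr; apply: le_trans hg.
exact: bigmin_le_cond.
Qed.
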